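(* Let $N\ge 2$ and let $a_1,a_2,\dots,a_{2N+1}$ be a sequence in $\mathbb{Z}_N$ such that (i) $a_1=a_2=\cdots=a_N$; (ii) $a_i\ne a_1$ for all $i\ge N+1$; (iii) the terms $a_{N+1},\dots,a_{2N+1}$ are not all equal. Then there is a set of indices $I\subseteq\{1,\dots,2N+1\}$ with $|I|=N$ such that $\sum_{i\in I}a_i=0$, $I\cap\{1,\dots,N\}\neq\emptyset$, and $I\not\subseteq\{1,\dots,N\}$. *)

(* Defs.v *)
From mathcomp Require Import all_boot all_algebra.
Set Implicit Arguments.
Unset Strict Implicit.
Unset Printing Implicit Defensive.

(* Main.v *)
Require Import Defs.
From mathcomp Require Import all_boot all_algebra.
From mathcomp Require Import zify.
Import GRing.Theory.
Local Open Scope ring_scope.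

Lemma psplit (N : nat) (e : nat -> 'Z_N) (l r : nat) : (l <= r)%N ->
  \sum_(v : 'I_N | (v < r)%N) e v =
  \sum_(v : 'I_N | (v < l)%N) e v + \sum_(v in [set v : 'I_N | (l <= v < r)%N]) e v.
Proof.
move=> lr; rewrite (bigID (fun v : 'I_N => (v < l)%N)) /=; congr (_ + _).
  by apply: eq_bigl => v; lia.
by apply: eq_bigl => v; rewrite inE; lia.
Qed.

Lemma cardS_lt (N : nat) (S : {set 'I_N}) (x : 'I_N) : x \notin S -> (#|S| < N)%N.
Proof.
move=> xS; rewrite -[X in (_ < X)%N]card_ord -cardsT; apply: proper_card.
rewrite properT; apply/negP => /eqP ST; by rewrite ST inE in xS.
Qed.

Lemma zs (N : nat) (hN : (2 <= N)%N) (e : nat -> 'Z_N) :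
  e 0%N != e 1%N -> (forall u, (u < N)%N -> e u != 0) ->
  exists S : {set 'I_N}, [/\ (0 < #|S|)%N, (#|S| < N)%N & \sum_(v in S) e v = 0].
Proof.
move=> e01 enz.
pose F := fun u : 'I_N.+1 => if (u < N)%N then \sum_(v : 'I_N | (v < u)%N) e v else e 1%N.
have: ~~ injectiveb F.
  apply/negP => /injectiveP inj; have := leq_card F inj.
  by rewrite card_ord card_ord Zp_cast //; lia.
case/injectivePn => u0 [w0] neq Fe.
have [u [w [uw Fuw]]] : exists u w : 'I_N.+1, (u < w)%N /\ F u = F w.
  case: (ltngtP u0 w0) => h; first by exists u0, w0.
    by exists w0, u0.
  by move/val_inj: h => h; rewrite h eqxx in neq.
have h0 : (0 < N)%N by lia.
have h1 : (1 < N)%N by lia.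
have hm : (N.-1 < N)%N by lia.
move: Fuw; rewrite /F.
have uN : (u < N)%N by have := ltn_ord w; lia.
rewrite uN.
have addK0 : forall x y : 'Z_N, x = x + y -> y = 0.
  by move=> x y h; apply: (@addrI _ x); rewrite addr0 -h.
case: ifP => wN Fuw.
  exists [set v : 'I_N | (u <= v < w)%N]; split.
  - apply/card_gt0P; exists (Ordinal uN); rewrite inE /=; lia.
  - apply: (@cardS_lt _ _ (Ordinal hm)); rewrite inE /=; lia.
  - apply: (addK0 (\sum_(v : 'I_N | (v < u)%N) e v)).
    by rewrite -psplit ?Fuw //; lia.
have [u0'|upos] := eqVneq (nat_of_ord u) 0%N.
  move: Fuw; rewrite big_pred0; last by move=> v; rewrite u0'.
  by move/esym/eqP; rewrite (negbTE (enz 1%N h1)).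
have [u1|u2] := eqVneq (nat_of_ord u) 1%N.
  move: Fuw; rewrite (big_pred1 (Ordinal h0)); last first.
    by move=> v; rewrite /pred1 /= -val_eqE /= u1; lia.
  by move=> /= /eqP; rewrite (negbTE e01).
exists [set v : 'I_N | (v == 0 :> nat) || (2 <= v < u)%N]; split.
- apply/card_gt0P; exists (Ordinal h0); rewrite inE /=; lia.
- apply: (@cardS_lt _ _ (Ordinal h1)); rewrite inE /=; lia.
- apply: (addK0 (e 1%N)).
  rewrite -{1}Fuw (bigD1 (Ordinal h1)) /=; last first.
  lia.
  idtac.
  congr (_ + _); apply: eq_bigl => v; rewrite inE -(inj_eq val_inj) /=; lia.
Qed.
Theorem lemma3p1 (N : nat) (hN : (2 <= N)%N) (a : 'I_(2 * N).+1 -> 'Z_N) :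
  (forall i j : 'I_(2 * N).+1, (i < N)%N -> (j < N)%N -> a i = a j) ->
  (forall j : 'I_(2 * N).+1, (N <= j)%N -> a j != a ord0) ->
  (exists j k : 'I_(2 * N).+1, [/\ (N <= j)%N, (N <= k)%N & a j != a k]) ->
  exists I : {set 'I_(2 * N).+1},
    [/\ #|I| = N, \sum_(i in I) a i = 0,
        (exists2 i, i \in I & (i < N)%N)
      & (exists2 i, i \in I & (N <= i)%N)].
Proof.
move=> H1 H2 [j0 [k0 [hj hk hjk]]].
set c := a ord0.
have [t tN ht] : exists2 t, (t < N)%N &
    a (inord (N + t)) != a (inord (N + t).+1).
  case: (boolP [exists t : 'I_N, a (inord (N + t)) != a (inord (N + t).+1)]).
    by case/existsP => t ht; exists t.
  rewrite negb_exists => /forallP hall.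
  have heq : forall x, (x <= N)%N -> a (inord (N + x)) = a (inord N).
    elim=> [|x IH] hx; first by rewrite addn0.
    have hxN : (x < N)%N by lia.
    rewrite -IH; last lia.
    by have := hall (Ordinal hxN); rewrite negbK => /eqP /= ->; rewrite addnS.
  exfalso; move: hjk.
  have ej : j0 = inord (N + (j0 - N)).
    by apply: val_inj; rewrite /= inordK; have := ltn_ord j0; lia.
  have ek : k0 = inord (N + (k0 - N)).
    by apply: val_inj; rewrite /= inordK; have := ltn_ord k0; lia.
  rewrite ej ek !heq ?eqxx //.
    by have := ltn_ord k0; lia.
  by have := ltn_ord j0; lia.
pose gnat n := if (t + n <= N)%N then (N + t + n)%N else (t + n).-1.
have gbound : forall n, (n < N)%N -> (N <= gnat n <= 2 * N)%N.
  by move=> n hn; rewrite /gnat; case: ifP => h; lia.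
have ginj : forall n m, (n < N)%N -> (m < N)%N -> gnat n = gnat m -> n = m.
  by move=> n m hn hm; rewrite /gnat; case: ifP => h1; case: ifP => h2; lia.
pose G (v : 'I_N) : 'I_(2 * N).+1 := inord (gnat v).
have GE : forall v : 'I_N, val (G v) = gnat v.
  by move=> v; apply: inordK; have := gbound v (ltn_ord v); lia.
have Ginj : injective G.
  move=> v w /(congr1 val); rewrite !GE => h; apply: val_inj.
  exact: ginj (ltn_ord v) (ltn_ord w) h.
pose e n := a (inord (gnat n)) - c.
have e01 : e 0%N != e 1%N.
  have g0 : gnat 0%N = (N + t)%N by rewrite /gnat; case: ifP => h; lia.
  have g1 : gnat 1%N = (N + t).+1 by rewrite /gnat; case: ifP => h; lia.
  rewrite /e g0 g1; apply: contra ht => /eqP h; apply/eqP.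
  by move: (congr1 (fun x => x + c) h) => /=; rewrite !subrK.
have enz : forall u, (u < N)%N -> e u != 0.
  move=> u hu; rewrite /e subr_eq0; apply: H2.
  by rewrite inordK; have := gbound u hu; lia.
have [S [S0 SN Ssum]] := zs N hN e e01 enz.
pose k := (N - #|S|)%N.
have hk2 : (k <= (2 * N).+1)%N by lia.
pose A := [set widen_ord hk2 j | j in 'I_k].
pose I := A :|: [set G v | v in S].
have disj : [disjoint A & [set G v | v in S]].
  rewrite -setI_eq0; apply/eqP/setP => i; rewrite !inE; apply/negP => /andP [/imsetP [j _ ->] /imsetP [v _ /(congr1 val)]].
  rewrite GE /=; have := gbound v (ltn_ord v); have := ltn_ord j; lia.
have winj : injective (widen_ord hk2) by move=> x y /(congr1 val) /= h; apply: val_inj.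
exists I; split.
- rewrite cardsU (disjoint_setI0 disj) cards0 subn0 card_imset // card_ord.
  rewrite card_in_imset; last by move=> x y _ _; apply: Ginj.
  rewrite /k subnK //; exact: ltnW.
- rewrite (eq_bigl [predU A & [set G v | v in S]]); last by move=> i; rewrite !inE.
  rewrite bigU //= big_imset /=; last by move=> x y _ _; apply: winj.
  rewrite big_imset /=; last by move=> x y _ _; apply: Ginj.
  rewrite (eq_bigr (fun _ => c)); last first.
    by move=> j _; apply: H1 => /=; have := ltn_ord j; rewrite /k; lia.
  rewrite (eq_bigr (fun v : 'I_N => e v + c)); last first.
    by move=> v _; rewrite /e subrK.
  rewrite big_split /= Ssum add0r !sumr_const card_ord -mulrnDr.
  have -> : (k + #|S|)%N = N by rewrite /k; lia.
  by rewrite -mulr_natr pchar_Zp ?mulr0 //; lia.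
- have kpos : (0 < k)%N by rewrite /k; lia.
  exists (widen_ord hk2 (Ordinal kpos)) => //.
    by rewrite inE; apply/orP; left; apply: imset_f.
  by rewrite /=; lia.
- have /card_gt0P [v vS] := S0.
  exists (G v); first by rewrite inE; apply/orP; right; apply: imset_f.
  by rewrite GE; have := gbound v (ltn_ord v); lia.
Qed.
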